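(* Let $q$ be a query, let $\pi_q$ be a finite ranked list of documents, and for each $d\in\pi_q$ let $\lambda(d|\pi_q)\in\mathbb{R}$ be a fixed weight, $r(d)\in\{0,1\}$ a fixed relevance judgment, and $k(d)$ the position of $d$ in the logged ranked list for $q$. Let $U$ be a finite set of users with a probability distribution $P(\cdot|q)$ on $U$, and for $u\in U$ write $p(d,u)=P(e(d)=1|k(d),u)$. Let $N_q$ be a finite nonempty collection of logged sessions for $q$, each session being a pair $(\vec c,u)$ with a fixed user $u\in U$; within each session the examinations $e(d)$, $d\in\pi_q$, are Bernoulli with $P(e(d)=1)=p(d,u)$, all examinations across documents and sessions are mutually independent, and clicks are $c(d)=e(d)\,r(d)$. Assume $p(d,u)>0$ for every $d$ with $r(d)=1$ and every user $u$ appearing in $N_q$. Define $$\hat{l}_{straight}(S|q,N_q)=\frac{1}{|N_q|}\sum_{(\vec c,u)\in N_q}\sum_{d\in\pi_q}\frac{\lambda(d|\pi_q)\,c(d)}{p(d,u)},\qquad \hat{l}_{user\text{-}aware}(S|q,N_q)=\frac{1}{|N_q|}\sum_{(\vec c,u)\in N_q}\sum_{d\in\pi_q}\frac{\lambda(d|\pi_q)\,c(d)}{\sum_{u'\in U}p(d,u')P(u'|q)}$$ (a summand with $c(d)=0$ being taken as $0$). Suppose that for all $d\in\pi_q$, $$\sum_{u\in U}p(d,u)P(u|q)\;\ge\;\frac{1}{|N_q|}\sum_{(\vec c,u)\in N_q}p(d,u).$$ Then $\mathbb{V}\big[\hat{l}_{user\text{-}aware}(S|q,N_q)\big]\le\mathbb{V}\big[\hat{l}_{straight}(S|q,N_q)\big]$,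 where the variances are over the examinations with the users of the sessions fixed.
   Context: Setting: unbiased learning to rank with a per-user position-based examination model and the examination hypothesis (a document is clicked iff it is examined and relevant). $S$ denotes the ranking model producing $\pi_q$; it enters only through the fixed weights $\lambda(d|\pi_q)$. The ''straightforward'' estimator uses each session's own user's examination probability as propensity; the ''user-aware'' estimator uses the $P(\cdot|q)$-weighted average examination probability. *)

(* Defs.v *)
From mathcomp Require Import all_boot all_order all_algebra.
Set Implicit Arguments. Unset Strict Implicit. Unset Printing Implicit Defensive.
Import Order.TTheory GRing.Theory Num.Theory.
Local Open Scope ring_scope.

Section ULTR.
Variables (R : realFieldType) (D U : finType) (n : nat).

(* Examination outcomes for all (session, document) pairs. *)
Definition outcome := {ffun 'I_n * D -> bool}.

Definition outcome_prob (p : D -> U -> R) (sess : 'I_n -> U) (e : outcome) : R :=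
  \prod_(x : 'I_n * D)
     (if e x then p x.2 (sess x.1) else 1 - p x.2 (sess x.1)).

Definition Expect (p : D -> U -> R) (sess : 'I_n -> U) (f : outcome -> R) : R :=
  \sum_(e : outcome) outcome_prob p sess e * f e.

Definition Var (p : D -> U -> R) (sess : 'I_n -> U) (f : outcome -> R) : R :=
  Expect p sess (fun e => (f e - Expect p sess f) ^+ 2).

Definition click (r : D -> bool) (e : outcome) (i : 'I_n) (d : D) : R :=
  (e (i, d) && r d)%:R.

(* Straightforward IPS estimator. (Division by 0 gives 0 in MathComp, consistent
   with the convention that summands with c(d) = 0 are 0.) *)
Definition l_straight (lam : D -> R) (r : D -> bool) (p : D -> U -> R)
  (sess : 'I_n -> U) (e : outcome) : R :=
  n%:R^-1 * \sum_(i < n) \sum_(d : D) lam d * click r e i d / p d (sess i).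

Definition avg_exam (p : D -> U -> R) (Pu : U -> R) (d : D) : R :=
  \sum_(u : U) p d u * Pu u.

Definition l_user_aware (lam : D -> R) (r : D -> bool) (p : D -> U -> R)
  (Pu : U -> R) (e : outcome) : R :=
  n%:R^-1 * \sum_(i < n) \sum_(d : D) lam d * click r e i d / avg_exam p Pu d.

End ULTR.

(* Main.v *)
Require Import Defs.
From mathcomp Require Import all_boot all_order all_algebra.
From mathcomp Require Import ring lra.
Set Implicit Arguments. Unset Strict Implicit. Unset Printing Implicit Defensive.
Import Order.TTheory GRing.Theory Num.Theory.
Local Open Scope ring_scope.

Section Gen.
Variables (R : realFieldType) (X : finType) (q : X -> R).
Definition Pr (e : {ffun X -> bool}) : R := \prod_x (if e x then q x else 1 - q x).
Definition Ex (f : {ffun X -> bool} -> R) : R := \sum_e Pr e * f e.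

Lemma Ex_prod (g : X -> bool -> R) :
  Ex (fun e => \prod_x g x (e x)) = \prod_x (q x * g x true + (1 - q x) * g x false).
Proof.
rewrite /Ex /Pr.
rewrite (eq_bigr (fun e : {ffun X -> bool} => \prod_x ((if e x then q x else 1 - q x) * g x (e x)))); last first.
  by move=> e _; rewrite big_split.
transitivity (\prod_x \sum_(b : bool) (if b then q x else 1 - q x) * g x b).
  by rewrite bigA_distr_bigA.
by apply: eq_bigr => x _; rewrite big_bool.
Qed.

Lemma prod_if1 (x : X) (F : X -> R) : \prod_z (if z == x then F z else 1) = F x.
Proof. by rewrite -big_mkcond big_pred1_eq. Qed.

Lemma Ex_lin (I : finType) (c : I -> R) (h : I -> {ffun X -> bool} -> R) :
  Ex (fun e => \sum_i c i * h i e) = \sum_i c i * Ex (h i).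
Proof.
rewrite /Ex.
under eq_bigr do rewrite mulr_sumr.
rewrite exchange_big; apply: eq_bigr => i _.
rewrite mulr_sumr; apply: eq_bigr => e _; ring.
Qed.

Definition Y (x : X) (e : {ffun X -> bool}) : R := (e x)%:R - q x.

Lemma Ex_bit x : Ex (fun e => (e x)%:R) = q x.
Proof.
have := Ex_prod (fun z b => if z == x then b%:R else 1).
rewrite /Ex => H.
transitivity (\prod_z (if z == x then q z else 1)); last by rewrite prod_if1.
rewrite -[X in _ = X](_ : \prod_z (q z * (if z == x then true%:R else 1) + (1 - q z) * (if z == x then false%:R else 1)) = _).
  rewrite -H; apply: eq_bigr => e _; congr (_ * _); by rewrite prod_if1.
apply: eq_bigr => z _; case: (z == x) => /=; ring.
Qed.

Lemma Ex_YY x y : Ex (fun e => Y x e * Y y e) = if x == y then q x * (1 - q x) else 0.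
Proof.
have := Ex_prod (fun z b => (if z == x then b%:R - q x else 1) * (if z == y then b%:R - q y else 1)).
rewrite /Ex => H.
rewrite (_ : \sum_e Pr e * (Y x e * Y y e) =
   \sum_e Pr e * \prod_z (fun z b => (if z == x then b%:R - q x else 1) * (if z == y then b%:R - q y else 1)) z (e z)).
  2: by apply: eq_bigr => e _; rewrite /= big_split /= !prod_if1.
rewrite H; case: eqP => [<-|/eqP nxy].
  rewrite -[RHS](prod_if1 x (fun z => q z * (1 - q z))).
  apply: eq_bigr => z _; case: eqP => [->|_] /=; ring.
rewrite (bigD1 x) //= eqxx (negbTE nxy) /=.
rewrite [X in X * _](_ : _ = 0) ?mul0r //; ring.
Qed.

Lemma Var_lin (c : X -> R) :
  Ex (fun e => ((\sum_x c x * (e x)%:R) - Ex (fun e => \sum_x c x * (e x)%:R)) ^+ 2)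
  = \sum_x c x ^+ 2 * (q x * (1 - q x)).
Proof.
rewrite Ex_lin.
under eq_bigr do rewrite Ex_bit.
transitivity (Ex (fun e => \sum_x c x * \sum_y c y * (Y x e * Y y e))).
  { apply: eq_bigr => e _; congr (_ * _); rewrite -sumrB expr2 mulr_suml.
       apply: eq_bigr => x _; rewrite mulr_sumr mulr_sumr.
       apply: eq_bigr => y _; rewrite /Y; ring. }
rewrite Ex_lin; apply: eq_bigr => x _.
rewrite (_ : Ex _ = \sum_y c y * Ex (fun e => Y x e * Y y e)); last by rewrite -Ex_lin.
under eq_bigr do rewrite Ex_YY.
rewrite (bigD1 x) //= eqxx big1 ?addr0; first ring.
by move=> y /negbTE; rewrite eq_sym => ->; rewrite mulr0.
Qed.
End Gen.

Lemma key (R : realFieldType) (q a m : R) : 0 < q -> q <= 1 -> 0 < m -> m <= a ->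
  q * (1 - q) / a ^+ 2 <= (1 - q) / q - (2 * m - 2) / m ^+ 2 * (q - m).
Proof.
move=> q0 q1 m0 ma.
have k0 : 0 <= q * (1 - q) by apply: mulr_ge0; lra.
have h1 : q * (1 - q) / a ^+ 2 <= q * (1 - q) / m ^+ 2.
  apply: ler_wpM2l => //; rewrite lef_pV2 ?posrE ?exprn_gt0 //; try lra.
  nra.
have h2 : (1 - q) / q - (2 * m - 2) / m ^+ 2 * (q - m) - q * (1 - q) / m ^+ 2
          = (q - m) ^+ 2 * (q + 1) / (q * m ^+ 2).
  field; apply/andP; split; apply/negP => /eqP; lra.
have h3 : 0 <= (q - m) ^+ 2 * (q + 1) / (q * m ^+ 2).
  apply: divr_ge0; [apply: mulr_ge0; [exact: sqr_ge0|lra]|].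
  apply: mulr_ge0; [lra| exact: sqr_ge0].
lra.
Qed.

Lemma sum_pairs (R : realFieldType) (n : nat) (D : finType) (G : 'I_n * D -> R) :
  \sum_(x : 'I_n * D) G x = \sum_(d : D) \sum_(i < n) G (i, d).
Proof.
rewrite exchange_big pair_bigA; apply: eq_bigr => -[i d] _ //.
Qed.

Lemma lin_form (R : realFieldType) (D U : finType) (n : nat) (lam : D -> R)
  (r : D -> bool) (w : 'I_n * D -> R) (e : outcome D n) :
  n%:R^-1 * \sum_(i < n) \sum_(d : D) lam d * click R r e i d / w (i, d)
  = \sum_x (n%:R^-1 * (lam x.2 * (r x.2)%:R / w x)) * (e x)%:R.
Proof.
rewrite pair_bigA mulr_sumr; apply: eq_bigr => -[i d] _ /=.
rewrite /click; case: (e (i, d)); case: (r d) => /=; ring.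
Qed.

Lemma Var_ext (R : realFieldType) (D U : finType) (n : nat) (p : D -> U -> R)
  (sess : 'I_n -> U) (f g : outcome D n -> R) :
  (forall e, f e = g e) -> Var p sess f = Var p sess g.
Proof.
move=> fg.
have E : Expect p sess f = Expect p sess g.
  by apply: eq_bigr => e _; rewrite fg.
by rewrite /Var E; apply: eq_bigr => e _; rewrite fg.
Qed.

Theorem theorem3p3 (R : realFieldType) (D U : finType) (n : nat)
  (lam : D -> R) (r : D -> bool) (p : D -> U -> R) (Pu : U -> R)
  (sess : 'I_n -> U) :
  (0 < n)%N ->
  (forall d u, 0 <= p d u <= 1) ->
  (forall u, 0 <= Pu u) -> \sum_(u : U) Pu u = 1 ->
  (forall d i, r d -> 0 < p d (sess i)) ->
  (forall d, n%:R^-1 * \sum_(i < n) p d (sess i) <= avg_exam p Pu d) ->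
  Var p sess (l_user_aware (n:=n) lam r p Pu) <= Var p sess (l_straight lam r p sess).
Proof.
move=> n0 p01 Pu0 Pu1 ppos hav.
set q := fun x : 'I_n * D => p x.2 (sess x.1).
have VL : forall c : 'I_n * D -> R,
    Var p sess (fun e => \sum_x c x * (e x)%:R) = \sum_x c x ^+ 2 * (q x * (1 - q x)).
  by move=> c; exact: (Var_lin q c).
have -> : Var p sess (l_user_aware (n:=n) lam r p Pu) = Var p sess (fun e => \sum_x (n%:R^-1 * (lam x.2 * (r x.2)%:R / avg_exam p Pu x.2)) * (e x)%:R).
  apply: Var_ext => e; exact: (lin_form U lam r (fun x => avg_exam p Pu x.2)).
have -> : Var p sess (l_straight lam r p sess) = Var p sess (fun e => \sum_x (n%:R^-1 * (lam x.2 * (r x.2)%:R / q x)) * (e x)%:R).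
  apply: Var_ext => e; exact: (lin_form U lam r q).
rewrite !VL !sum_pairs; apply: ler_sum => d _ /=.
case rd: (r d); last first.
  by rewrite big1 ?[X in _ <= X]big1 // => i _; rewrite mulr0 mul0r mulr0 expr0n /= mul0r.
rewrite /q /=.
set a := avg_exam p Pu d.
set m := n%:R^-1 * \sum_(i < n) p d (sess i).
have nR : 0 < n%:R :> R by rewrite ltr0n.
have m0 : 0 < m.
  apply: mulr_gt0; first by rewrite invr_gt0.
  have [k _] : exists k : 'I_n, true by exists (Ordinal n0).
  rewrite (bigD1 k) //=.
  have h1 := ppos d k rd.
  have h2 : 0 <= \sum_(i < n | i != k) p d (sess i).
    by apply: sumr_ge0 => i _; have := p01 d (sess i) => /andP[].
  lra.
have ma : m <= a by exact: hav.
set K := n%:R^-1 * lam d.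
set t := (2 * m - 2) / m ^+ 2.
have step : forall i : 'I_n,
   (n%:R^-1 * (lam d * 1%:R / a)) ^+ 2 * (p d (sess i) * (1 - p d (sess i)))
   <= K ^+ 2 * ((1 - p d (sess i)) / p d (sess i) - t * (p d (sess i) - m)).
  move=> i.
  have qp := ppos d i rd; have := p01 d (sess i) => /andP[_ q1].
  rewrite (_ : (n%:R^-1 * (lam d * 1%:R / a)) ^+ 2 * _ = K ^+ 2 * (p d (sess i) * (1 - p d (sess i)) / a ^+ 2)); last first.
    rewrite /K; field; apply/andP; split; apply/negP => /eqP ?; lra.
  apply: ler_wpM2l; first exact: sqr_ge0.
  exact: key.
apply: (le_trans (ler_sum _ (fun i _ => step i))).
rewrite -mulr_sumr sumrB -mulr_sumr.
have Z : \sum_(i < n) (p d (sess i) - m) = 0.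
  rewrite sumrB sumr_const card_ord -mulr_natl /m; field; apply/negP => /eqP ?; lra.
rewrite Z mulr0 subr0 mulr_sumr; apply: ler_sum => i _.
have qp := ppos d i rd.
rewrite /K le_eqVlt; apply/orP; left; apply/eqP; field; apply/andP; split; apply/negP => /eqP ?; lra.
Qed.
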